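(* For every $\alpha\in\mathbb{R}$, the sequence $\{k+\alpha\}_{k=0}^{\infty}$ is not a Legendre multiplier sequence.
   Context: The Legendre polynomials $\mathfrak{Le}_n(x)$ are defined by $\frac{1}{\sqrt{1-2xt+t^2}}=\sum_{k=0}^{\infty}\mathfrak{Le}_k(x)t^k$. A real sequence $\{\gamma_k\}_{k=0}^{\infty}$ is a Legendre multiplier sequence if, for every $n$ and all real $a_0,\dots,a_n$, the polynomial $\sum_{k=0}^n a_k\gamma_k\mathfrak{Le}_k(x)$ has only real zeros whenever $\sum_{k=0}^n a_k\mathfrak{Le}_k(x)$ has only real zeros. *)

(* Defs.v *)
From HB Require Import structures.
From mathcomp Require Import all_boot all_order all_algebra.
From mathcomp Require Import complex.
From mathcomp Require Import reals.
Set Implicit Arguments. Unset Strict Implicit. Unset Printing Implicit Defensive.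
Import Order.TTheory GRing.Theory Num.Theory.
Local Open Scope ring_scope.

(* Legendre polynomials via the generating function
   (1 - 2xt + t^2)^(-1/2) = sum_m binom(-1/2, m) (-1)^m (2xt - t^2)^m
                          = sum_m C(2m,m)/4^m (2xt - t^2)^m,
   and Le_n(x) = [t^n] of this series.  Only m <= n contribute to [t^n].
   The bivariate polynomial (2xt - t^2) is an element of {poly {poly R}}
   with outer variable t and inner variable x. *)
Definition legendre_u (R : nzRingType) : {poly {poly R}} :=
  ('X *+ 2)%:P * 'X - 'X ^+ 2.

Definition legendre (R : fieldType) (n : nat) : {poly R} :=
  \sum_(m < n.+1) (('C(2 * m, m))%:R / 4%:R ^+ m) *: (legendre_u R ^+ m)`_n.

Definition real_rooted (R : rcfType) (p : {poly R}) : Prop :=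
  p = 0 \/ forall z : R[i], root (map_poly (real_complex R) p) z -> 'Im z = 0.

Definition legendre_multiplier_sequence (R : rcfType) (gamma : nat -> R) : Prop :=
  forall (n : nat) (a : nat -> R),
    real_rooted (\sum_(k < n.+1) a k *: legendre R k) ->
    real_rooted (\sum_(k < n.+1) (a k * gamma k) *: legendre R k).

(* Main.v *)
Require Import Defs.
From HB Require Import structures.
From mathcomp Require Import all_boot all_order all_algebra.
From mathcomp Require Import complex.
From mathcomp Require Import reals.
Import Order.TTheory GRing.Theory Num.Theory.
Local Open Scope ring_scope.
From mathcomp Require Import ring lra.

Section L.
Variable R : fieldType.

Lemma uE : legendre_u R = 'X * (('X *+ 2)%:P - 'X).
Proof. rewrite /legendre_u; ring. Qed.

Lemma coef_u m n i : ((legendre_u R ^+ m)`_n)`_i =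
  if (n < m)%N then 0 else
  \sum_(j < m.+1) ((-1) ^+ j * ('X^(m - j) *+ 2 ^ (m - j))`_i *
     ((n - m)%N == j)%:R) *+ 'C(m, j).
Proof.
rewrite uE exprMn coefXnM; case: ltnP => _; first by rewrite coef0.
rewrite exprBn coef_sum coef_sum; apply: eq_bigr => j _.
rewrite coefMn coefMn; congr (_ *+ _).
have -> : (-1) ^+ j * ('X *+ 2 : {poly R})%:P ^+ (m - j) =
   (((-1) ^+ j : R) *: ('X *+ 2) ^+ (m - j))%:P.
  by rewrite -mul_polyC !rmorphM !rmorphXn /= !rmorphN !rmorph1.
rewrite coefCM coefXn mulr_natr coefMn coefZ exprMn_n.
by rewrite mulr_natr.
Qed.

Lemma coef_leg n i : (legendre R n)`_i = \sum_(m < n.+1)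
   ('C(2 * m, m)%:R / 4%:R ^+ m) * ((legendre_u R ^+ m)`_n)`_i.
Proof. by rewrite coef_sum; apply: eq_bigr => m _; rewrite coefZ. Qed.
End L.

Lemma bv0 : 'C(2 * 1, 1) = 2%N. Proof. by []. Qed.
Lemma bv1 : 'C(2 * 2, 2) = 6%N. Proof. by []. Qed.
Lemma bv2 : 'C(2 * 3, 3) = 20%N. Proof. by []. Qed.
Lemma bv3 : 'C(2 * 4, 4) = 70%N. Proof. by []. Qed.
Lemma bv4 : 'C(3, 1) = 3%N. Proof. by []. Qed.
Lemma bv5 : 'C(3, 2) = 3%N. Proof. by []. Qed.
Lemma bv6 : 'C(4, 1) = 4%N. Proof. by []. Qed.
Lemma bv7 : 'C(4, 2) = 6%N. Proof. by []. Qed.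
Lemma bv8 : 'C(4, 3) = 4%N. Proof. by []. Qed.
Lemma bv9 : 'C(2, 1) = 2%N. Proof. by []. Qed.

Section M.
Variable R : numFieldType.
Definition a4 (k : nat) : R := nth 0 [:: 1/5; 0; 4/7; 0; 8/35] k.
Definition a2 (k : nat) : R := nth 0 [:: 1/3; 0; 2/3] k.

Ltac legcomp := apply/polyP => i;
  rewrite coef_sum; under eq_bigr => k _ do rewrite coefZ;
  rewrite !big_ord_recr big_ord0 /= !coef_leg;
  rewrite !big_ord_recr !big_ord0 /= !coef_u /=;
  rewrite !big_ord_recr !big_ord0 /= !coefMn !coefXn.

Ltac fin := rewrite ?subn0 ?bv0 ?bv1 ?bv2 ?bv3 ?bv4 ?bv5 ?bv6 ?bv7 ?bv8 ?bv9 ?natrX; by field.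

Lemma f4 : \sum_(k < 5) a4 k *: legendre R k = 'X^4.
Proof.
legcomp.
rewrite /a4 /=.
by case: i => [|[|[|[|[|i]]]]]; rewrite /= ?(mulr0, mul0r, addr0, add0r, mul0rn, mulr1n, expr0, mul1r, mulr1); fin.
Qed.

Lemma g4 (al : R) : \sum_(k < 5) (a4 k * (k%:R + al)) *: legendre R k =
  (4 + al) *: 'X^4 - (12/7) *: 'X^2 - (8/35)%:P.
Proof.
legcomp.
rewrite coefB coefB !coefZ ?coefXn coefC /a4 /=.
by case: i => [|[|[|[|[|i]]]]]; rewrite /= ?(mulr0, mul0r, addr0, add0r, mul0rn, mulr1n, expr0, mul1r, mulr1, subr0); fin.
Qed.

Lemma f2 : \sum_(k < 3) a2 k *: legendre R k = 'X^2.
Proof.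
legcomp.
rewrite /a2 /=.
by case: i => [|[|[|i]]]; rewrite /= ?(mulr0, mul0r, addr0, add0r, mul0rn, mulr1n, expr0, mul1r, mulr1); fin.
Qed.

Lemma g2 (al : R) : \sum_(k < 3) (a2 k * (k%:R + al)) *: legendre R k =
  (2 + al) *: 'X^2 - (2/3)%:P.
Proof.
legcomp.
rewrite coefB !coefZ ?coefXn coefC /a2 /=.
by case: i => [|[|[|i]]]; rewrite /= ?(mulr0, mul0r, addr0, add0r, mul0rn, mulr1n, expr0, mul1r, mulr1, subr0); fin.
Qed.
End M.

Lemma sq_i (R : rcfType) (s : R) : ((0 +i* s)%C) ^+ 2 = (- (s ^+ 2))%:C%C.
Proof.
rewrite expr2; apply/eqP; rewrite eq_complex /=.
by apply/andP; split; apply/eqP; ring.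
Qed.

Lemma nonreal_root (R : rcfType) (A c d y0 : R) :
  y0 < 0 -> A * y0 ^+ 2 - c * y0 - d = 0 ->
  exists z : R[i], root (map_poly (real_complex R) (A *: 'X^4 - c *: 'X^2 - d%:P)) z
     /\ 'Im z != 0.
Proof.
move=> y0n hy.
have sp : 0 < Num.sqrt (- y0).
  by rewrite sqrtr_gt0 oppr_gt0; exact: y0n.
exists (Complex 0 (Num.sqrt (- y0))); split; last by rewrite -complexIm /= fmorph_eq0 (lt0r_neq0 sp).
rewrite rootE !rmorphB /= !map_polyZ /= !map_polyXn map_polyC /= !hornerE /=.
have h2 := @sq_i R (Num.sqrt (- y0)).
rewrite sqr_sqrtr ?oppr_ge0 ?ltW // opprK in h2.
have e : forall w : R[i], (A%:C)%C * w * w * w * w - (c%:C)%C * w * w - (d%:C)%C =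
   (A%:C)%C * (w ^+ 2) ^+ 2 - (c%:C)%C * w ^+ 2 - (d%:C)%C by move=> w; ring.
by rewrite e h2 -!rmorphXn -!rmorphM -!rmorphB /= hy rmorph0.
Qed.

Lemma nonreal_root2 (R : rcfType) (A d y0 : R) :
  y0 < 0 -> A * y0 - d = 0 ->
  exists z : R[i], root (map_poly (real_complex R) (A *: 'X^2 - d%:P)) z
     /\ 'Im z != 0.
Proof.
move=> y0n hy.
have sp : 0 < Num.sqrt (- y0).
  by rewrite sqrtr_gt0 oppr_gt0; exact: y0n.
exists (Complex 0 (Num.sqrt (- y0))); split; last by rewrite -complexIm /= fmorph_eq0 (lt0r_neq0 sp).
rewrite rootE !rmorphB /= !map_polyZ /= !map_polyXn map_polyC /= !hornerE /=.
have h2 := @sq_i R (Num.sqrt (- y0)).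
rewrite sqr_sqrtr ?oppr_ge0 ?ltW // opprK in h2.
have e : forall w : R[i], (A%:C)%C * w * w - (d%:C)%C =
   (A%:C)%C * w ^+ 2 - (d%:C)%C by move=> w; ring.
by rewrite e h2 -!rmorphM -!rmorphB /= hy rmorph0.
Qed.

Lemma rX (R : rcfType) n : (0 < n)%N -> real_rooted ('X^n : {poly R}).
Proof.
move=> n0; right => z; rewrite map_polyXn rootE hornerXn expf_eq0 n0 /= => /eqP ->.
by rewrite -complexIm /= rmorph0.
Qed.

Theorem proposition4p3 (R : realType) (alpha : R) :
  ~ legendre_multiplier_sequence (fun k : nat => k%:R + alpha).
Proof.
move=> H.
have [hlt|hge] := ltrP alpha (-2).
- have := H 2%N (@a2 R); rewrite f2 => /(_ (@rX R 2 isT)).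
  rewrite /= g2; case => [g0 | Hr].
    have := congr1 (fun p : {poly R} => p`_0) g0.
    rewrite /= coefB coefZ coefXn coefC coef0 /= => h; lra.
  have y0n : (2 / 3) / (2 + alpha) < 0.
    by rewrite pmulr_rlt0 ?invr_lt0 ?divr_gt0 ?ltr0n //; lra.
  have hA : 2 + alpha != 0 by rewrite lt_eqF //; lra.
  have [z [rz iz]] := @nonreal_root2 R (2 + alpha) (2 / 3) _ y0n
     (ltac:(by field)).
  by move: iz; rewrite (Hr z rz) eqxx.
- have := H 4%N (@a4 R); rewrite f4 => /(_ (@rX R 4 isT)).
  rewrite /= g4; case => [g0 | Hr].
    have := congr1 (fun p : {poly R} => p`_0) g0.
    rewrite /= !coefB !coefZ !coefXn coefC coef0 /= => h; lra.
  set A := 4 + alpha.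
  have hA : 0 < A by rewrite /A; lra.
  set D := (12 / 7) ^+ 2 + 4 * A * (8 / 35) : R.
  have hD : 0 <= D by rewrite /D; apply: addr_ge0; [exact: sqr_ge0 | apply: mulr_ge0; [apply: mulr_ge0|]; [|exact: ltW|]; by rewrite ?divr_ge0 ?ler0n].
  set sD := Num.sqrt D.
  have hsD : sD ^+ 2 = D by rewrite /sD sqr_sqrtr.
  have sD0 : 0 <= sD by rewrite /sD sqrtr_ge0.
  have hlt : 12 / 7 < sD.
    rewrite -(ltr_pXn2r (isT : (0 < 2)%N)) ?nnegrE ?hsD //; last by rewrite divr_ge0 ?ler0n.
    rewrite /D ltrDl; apply: mulr_gt0; [apply: mulr_gt0|]; by rewrite ?divr_gt0 ?ltr0n.
  have y0n : (12 / 7 - sD) / (2 * A) < 0.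
    by rewrite pmulr_llt0 ?invr_gt0 ?mulr_gt0 ?ltr0n // subr_lt0.
  have hA' : A != 0 by rewrite gt_eqF.
  have hy : A * ((12 / 7 - sD) / (2 * A)) ^+ 2 - 12 / 7 * ((12 / 7 - sD) / (2 * A)) - 8 / 35 = 0.
    have -> : A * ((12 / 7 - sD) / (2 * A)) ^+ 2 - 12 / 7 * ((12 / 7 - sD) / (2 * A)) - 8 / 35
       = (sD ^+ 2 - D) / (4 * A) by rewrite /D; field.
    by rewrite hsD subrr mul0r.
  have [z [rz iz]] := @nonreal_root R A (12 / 7) (8 / 35) _ y0n hy.
  by move: iz; rewrite (Hr z rz) eqxx.
Qed.
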